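(* Let $d\ge2$ and let $K$ be a positive integer. For each $x\in[0,1]$ fix one binary expansion $x=\sum_{j\ge1}a_j^x2^{-j}$, $a_j^x\in\{0,1\}$, and define $\phi_K(x)=\sum_{j=1}^K2a_j^x3^{-d(j-1)}$. Suppose $f:[0,1]^d\to\mathbb{R}$ satisfies $|f(\mathbf x)-f(\mathbf y)|\le Q|\mathbf x-\mathbf y|_\infty^\beta$ for all $\mathbf x,\mathbf y\in[0,1]^d$, for some $0<\beta\le1$ and $Q\ge0$. Then there exists a function $g:\mathcal C\to\mathbb{R}$ on the Cantor set $\mathcal C$ such that $|g(x)-g(y)|\le2^\beta Q|x-y|^{\frac{\beta\log2}{d\log3}}$ for all $x,y\in\mathcal C$, $$\Big|f(\mathbf x)-g\Big(\sum_{p=1}^d3^{-p}\phi_K(x_p)\Big)\Big|\le Q\,2^{-\beta(K-4)}\qquad\text{for all }\mathbf x=(x_1,\ldots,x_d)\in[0,1]^d$$ (note $\sum_{p=1}^d3^{-p}\phi_K(x_p)\in\mathcal C$), and $\sup_{\mathbf x\in[0,1]^d}|f(\mathbf x)|=\sup_{z\in\mathcal C}|g(z)|$.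
   Context: $|\cdot|_\infty$ denotes the maximum norm on $\mathbb{R}^d$. The Cantor set $\mathcal C\subset[0,1]$ is the set of numbers having a ternary expansion using only the digits $0$ and $2$. *)

(* Defs.v *)
From HB Require Import structures.
From mathcomp Require Import all_boot all_order all_algebra.
From mathcomp Require Import all_classical all_reals all_analysis.
Set Implicit Arguments. Unset Strict Implicit. Unset Printing Implicit Defensive.
Import Order.TTheory GRing.Theory Num.Theory.
Import numFieldNormedType.Exports.
Local Open Scope classical_set_scope.
Local Open Scope ring_scope.

Definition cube (R : realType) (d : nat) : set ('I_d -> R) :=
  [set x | forall i, 0 <= x i <= 1].

Definition linf_dist (R : realType) (d : nat) (x y : 'I_d -> R) : R :=
  \big[Num.max/0]_(i < d) `|x i - y i|.

Definition cantor_set (R : realType) : set R :=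
  [set x | exists c : nat -> bool,
     (fun n => \sum_(1 <= j < n) (2 * (c j)%:R) / 3 ^+ j) @ \oo --> x].

(* a x is a binary expansion of x for every x in [0,1]:
   x = sum_{j>=1} a_j^x 2^{-j}  (a x 0 is unused). *)
Definition binary_expansion (R : realType) (a : R -> nat -> bool) : Prop :=
  forall x : R, 0 <= x <= 1 ->
    (fun n => \sum_(1 <= j < n) (a x j)%:R / 2 ^+ j) @ \oo --> x.

Definition phiK (R : realType) (d K : nat) (a : R -> nat -> bool) (x : R) : R :=
  \sum_(1 <= j < K.+1) (2 * (a x j)%:R) * 3 ^- (d * (j - 1)).

Definition innerK (R : realType) (d K : nat) (a : R -> nat -> bool)
  (x : 'I_d -> R) : R :=
  \sum_(p < d) 3 ^- (p.+1) * phiK d K a (x p).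

Arguments cube R d : clear implicits.
Arguments cantor_set R : clear implicits.
Arguments phiK {R} d K a x.
Arguments innerK {R} d K a x.

(* Main.v *)
Require Import Defs.
From HB Require Import structures.
From mathcomp Require Import all_boot all_order all_algebra.
From mathcomp Require Import all_classical all_reals all_analysis.
From mathcomp Require Import ring lra zify.
Set Implicit Arguments. Unset Strict Implicit. Unset Printing Implicit Defensive.
Import Order.TTheory GRing.Theory Num.Theory.
Import numFieldNormedType.Exports.
Local Open Scope classical_set_scope.
Local Open Scope ring_scope.

Section Gen.
Variable R : realType.
Variable B : R.
Hypothesis B1 : 1 < B.

Definition ps (c : nat -> bool) n := \sum_(1 <= j < n) (B - 1) * (c j)%:R / B ^+ j.

Lemma Bpos : 0 < B. Proof. have := B1; lra. Qed.
Lemma BX_gt0 n : 0 < B ^+ n. Proof. by rewrite exprn_gt0 // Bpos. Qed.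

Lemma geom n m : (n <= m)%N -> \sum_(n <= j < m) (B - 1) / B ^+ j = B / B ^+ n - B / B ^+ m.
Proof.
elim: m => [|m IH]; first by rewrite leqn0 => /eqP ->; rewrite big_geq // subrr.
rewrite leq_eqVlt => /orP [/eqP ->|]; first by rewrite big_geq // subrr.
rewrite ltnS => /[dup] nm /IH {}IH.
transitivity ((B / B ^+ n - B / B ^+ m) + (B - 1) / B ^+ m); first by rewrite -IH big_nat_recr.
have hB := BX_gt0 m; rewrite exprS; field.
by rewrite !gt_eqF ?BX_gt0 ?Bpos.
Qed.

Lemma term_ge0 (c : nat -> bool) j : 0 <= (B - 1) * (c j)%:R / B ^+ j.
Proof.
have hB := BX_gt0 j; have := B1; case: (c j) => /= h; last by rewrite mulr0 mul0r.
rewrite mulr1 divr_ge0 //; [lra | exact: ltW].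
Qed.

Lemma term_le (c : nat -> bool) j : (B - 1) * (c j)%:R / B ^+ j <= (B - 1) / B ^+ j.
Proof.
have hB := BX_gt0 j; have := B1; case: (c j) => /= h; first by rewrite mulr1.
rewrite mulr0 mul0r divr_ge0 //; [lra | exact: ltW].
Qed.

Lemma ps_split c n m : (1 <= n <= m)%N ->
  ps c m = ps c n + \sum_(n <= j < m) (B - 1) * (c j)%:R / B ^+ j.
Proof. by move=> /andP[h1 h2]; rewrite /ps (@big_cat_nat _ _ _ n). Qed.

Lemma ps0 c : ps c 0 = 0. Proof. by rewrite /ps big_geq. Qed.
Lemma ps1 c : ps c 1 = 0. Proof. by rewrite /ps big_geq. Qed.

Lemma ps_tail c n m : (1 <= n <= m)%N -> ps c n <= ps c m <= ps c n + B / B ^+ n.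
Proof.
move=> /[dup] h /andP[h1 h2]; rewrite (ps_split c h) lerDl lerD2l.
apply/andP; split; first by apply: sumr_ge0 => j _; exact: term_ge0.
apply: (le_trans (ler_sum _ (fun j _ => term_le c j))).
rewrite geom // lerBlDr lerDl divr_ge0 //; [exact: ltW Bpos| exact: ltW (BX_gt0 _)].
Qed.

Lemma ps_ge0 c n : 0 <= ps c n.
Proof. by apply: sumr_ge0 => j _; exact: term_ge0. Qed.

Lemma ps_le1 c m : ps c m <= 1.
Proof.
case: m => [|m]; first by rewrite ps0.
have /andP[_] := @ps_tail c 1 m.+1 erefl.
by rewrite ps1 add0r expr1 divff // gt_eqF // Bpos.
Qed.

Lemma ps_nd c : nondecreasing_seq (ps c).
Proof.
move=> n m nm; case: n nm => [|n] nm; first by rewrite ps0 ps_ge0.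
by have /andP[] := @ps_tail c n.+1 m nm.
Qed.

Lemma ps_cvg c : cvgn (ps c).
Proof.
apply: nondecreasing_is_cvgn; first exact: ps_nd.
by exists 1 => _ [n _ <-]; exact: ps_le1.
Qed.

Lemma lim_bounds c (l : R) n : ps c @ \oo --> l -> (1 <= n)%N ->
  ps c n <= l <= ps c n + B / B ^+ n.
Proof.
move=> hl n1; apply/andP; split.
  apply: (cvgr_to_ge hl); exists n => // k /= hk.
  have hnk : (1 <= n <= k)%N by rewrite n1 hk.
  by have /andP[] := @ps_tail c n k hnk.
apply: (cvgr_to_le hl); exists n => // k /= hk.
have hnk : (1 <= n <= k)%N by rewrite n1 hk.
  by have /andP[] := @ps_tail c n k hnk.
Qed.

Lemma lim_01 c (l : R) : ps c @ \oo --> l -> 0 <= l <= 1.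
Proof.
move=> hl; apply/andP; split.
  by have /andP[+ _] := lim_bounds hl (erefl (0 < 1)%N); rewrite ps1.
by apply: (cvgr_to_le hl); exists 0%N => // k _; exact: ps_le1.
Qed.

Lemma ps_eq c c' n : (forall j, (1 <= j < n)%N -> c j = c' j) -> ps c n = ps c' n.
Proof. by move=> h; apply: eq_big_nat => j /h ->. Qed.

Lemma lim_agree c c' (l l' : R) k : ps c @ \oo --> l -> ps c' @ \oo --> l' ->
  (forall j, (1 <= j < k.+1)%N -> c j = c' j) -> `|l - l'| <= B / B ^+ k.+1.
Proof.
move=> hl hl' h.
have /andP[a1 a2] := lim_bounds hl (ltn0Sn k).
have /andP[b1 b2] := lim_bounds hl' (ltn0Sn k).
rewrite (ps_eq h) in a1 a2.
rewrite ler_norml; apply/andP; split; lra.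
Qed.

Lemma lim_sep c c' (l l' : R) m : ps c @ \oo --> l -> ps c' @ \oo --> l' -> (1 <= m)%N ->
  (forall j, (1 <= j < m)%N -> c j = c' j) -> c m = true -> c' m = false ->
  (B - 2) / B ^+ m <= l - l'.
Proof.
move=> hl hl' m1 h cm c'm.
have /andP[a1 _] := lim_bounds hl (ltn0Sn m).
have /andP[_ b2] := lim_bounds hl' (ltn0Sn m).
have hm : (1 <= m <= m.+1)%N by rewrite m1 leqnSn.
rewrite (ps_split c hm) (ps_split c' hm) !big_nat1 cm c'm (ps_eq h) in a1 b2.
have hB := BX_gt0 m.
have e : (B - 2) / B ^+ m = (B - 1) / B ^+ m - B / B ^+ m.+1.
  rewrite exprS; field; by rewrite !gt_eqF ?Bpos.
rewrite e; rewrite /= mulr0 mul0r addr0 mulr1 in a1 b2 *.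
lra.
Qed.
End Gen.

Section Main.
Variable R : realType.
Variable d : nat.
Hypothesis d0 : (0 < d)%N.

Definition in3 (z : R) := exists c, ps (3:R) c @ \oo --> z.

Definition digits (z : R) : nat -> bool :=
  match pselect (in3 z) with left H => projT1 (cid H) | right _ => fun _ => false end.

Lemma digitsP z : in3 z -> ps (3:R) (digits z) @ \oo --> z.
Proof.
rewrite /digits; case: pselect => // H _; exact: (projT2 (cid H)).
Qed.

Lemma B3 : (1 : R) < 3. Proof. lra. Qed.
Lemma B2 : (1 : R) < 2. Proof. lra. Qed.

Lemma uniq3 c c' (z z' : R) : ps (3:R) c @ \oo --> z -> ps (3:R) c' @ \oo --> z' ->
  (exists2 m, (1 <= m)%N & c m != c' m) ->
  exists m, [/\ (1 <= m)%N, (forall j, (1 <= j < m)%N -> c j = c' j) & 1 / 3 ^+ m <= `|z - z'|].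
Proof.
move=> hz hz' [m0 m01 hm0].
have ex : exists m, (0 < m)%N && (c m != c' m) by exists m0; rewrite m01.
case: (ex_minnP ex) => m /andP[m1 hm] hmin.
exists m; split => //.
  move=> j /andP[j1 jm]; apply/eqP; apply: contraTT jm => hj.
  by rewrite -leqNgt hmin // j1.
have hj : forall j, (1 <= j < m)%N -> c j = c' j.
  move=> j /andP[j1 jm]; apply/eqP; apply: contraTT jm => hj.
  by rewrite -leqNgt hmin // j1.
have e : (3 - 2 : R) = 1 by lra.
move: hm; case hc: (c m); case hc': (c' m) => // _.
  have := lim_sep B3 hz hz' m1 hj hc hc'; rewrite e => h.
  by rewrite (le_trans h) // ler_norm.
have hj' : forall j, (1 <= j < m)%N -> c' j = c j by move=> j /hj ->.
have := lim_sep B3 hz' hz m1 hj' hc' hc; rewrite e => h.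
by rewrite distrC (le_trans h) // ler_norm.
Qed.

Lemma digits_uniq c z : ps (3:R) c @ \oo --> z -> forall i, (1 <= i)%N -> digits z i = c i.
Proof.
move=> hz; have hz3 : in3 z by exists c.
have hd := digitsP hz3.
apply: contrapT => /existsNP [i /not_implyP [i1 /eqP hi]].
have [m [m1 _ h]] := uniq3 hd hz (ex_intro2 _ _ i i1 hi).
move: h; rewrite subrr normr0; have := BX_gt0 B3 m.
move=> h1 h2; have : 0 < 1 / (3 : R) ^+ m by rewrite divr_gt0.
lra.
Qed.

Definition bits (c : nat -> bool) (p : 'I_d) (j : nat) := c (p.+1 + d * j.-1)%N.
Definition dec (c : nat -> bool) : 'I_d -> R := fun p => limn (ps (2:R) (bits c p)).

Lemma decP c p : ps (2:R) (bits c p) @ \oo --> dec c p.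
Proof. exact: (ps_cvg B2). Qed.

Definition inter (b : 'I_d -> nat -> bool) (i : nat) : bool :=
  b (Ordinal (ltn_pmod i.-1 d0)) ((i.-1) %/ d).+1.

Lemma inter_bits b (p : 'I_d) j : (1 <= j)%N -> inter b (p.+1 + d * j.-1) = b p j.
Proof.
move=> j1; rewrite /inter addSn /=.
have e1 : ((p + d * j.-1) %% d = p)%N.
  by rewrite addnC mulnC modnMDl modn_small.
have e2 : ((p + d * j.-1) %/ d = j.-1)%N.
  by rewrite addnC mulnC divnMDl // divn_small // addn0.
rewrite e2 prednK //; congr b; apply: val_inj => /=; exact: e1.
Qed.

Lemma ps2_inter b p : ps (2:R) (bits (inter b) p) = ps (2:R) (b p).
Proof.
apply: funext => n; apply: ps_eq => j /andP[j1 _]; exact: inter_bits.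
Qed.

Lemma dec_inter b p : ps (2:R) (b p) @ \oo --> dec (inter b) p.
Proof. rewrite -ps2_inter; exact: decP. Qed.

Lemma dec_eq c c' : (forall i, (1 <= i)%N -> c i = c' i) -> dec c = dec c'.
Proof.
move=> h; apply: funext => p; rewrite /dec.
have -> : ps (2:R) (bits c p) = ps (2:R) (bits c' p); last by [].
apply: funext => n; apply: ps_eq => j _; rewrite /bits h //; lia.
Qed.

Lemma dec01 c p : 0 <= dec c p <= 1.
Proof. exact: (lim_01 B2 (@decP c p)). Qed.

Lemma cantorE z : cantor_set R z <-> in3 z.
Proof.
have e : forall c : nat -> bool, (fun n => \sum_(1 <= j < n) (2 * (c j)%:R) / 3 ^+ j : R) = ps (3:R) c.
  move=> c; apply: funext => n; apply: eq_bigr => j _.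
  by have -> : (3 : R) - 1 = 2 by lra.
rewrite /cantor_set /in3 /=; split => -[c hc]; exists c; [by rewrite e in hc | by rewrite e].
Qed.

Lemma binE (c : nat -> bool) : (fun n => \sum_(1 <= j < n) (c j)%:R / 2 ^+ j : R) = ps (2:R) c.
Proof.
apply: funext => n; apply: eq_bigr => j _.
have -> : (2 : R) - 1 = 1 by lra.
by rewrite mul1r.
Qed.

Lemma block (b : 'I_d -> nat -> bool) K' :
  ps (3:R) (inter b) (d * K').+1 =
  \sum_(p < d) 3 ^- (p.+1) * \sum_(1 <= j < K'.+1) (2 * (b p j)%:R) * 3 ^- (d * (j - 1)).
Proof.
elim: K' => [|K IH].
  rewrite muln0 ps1 big1 // => p _; rewrite big_geq // mulr0 //.
have h : (1 <= (d * K).+1 <= (d * K.+1).+1)%N by rewrite mulnS; lia.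
rewrite (ps_split 3 (inter b) h) IH.
have -> : \sum_((d * K).+1 <= j < (d * K.+1).+1) (3 - 1) * (inter b j)%:R / 3 ^+ j =
   \sum_(p < d) (3 - 1) * (inter b (p + (d * K).+1))%:R / (3:R) ^+ (p + (d * K).+1).
  rewrite -{1}[(d * K).+1]add0n big_addn big_mkord.
  have -> : ((d * K.+1).+1 - (d * K).+1 = d)%N by rewrite subSS mulnS addnK.
  by [].
rewrite -big_split /=; apply: eq_bigr => p _.
rewrite [in RHS]big_nat_recr //= mulrDr; congr (_ + _).
have -> : (p + (d * K).+1 = p.+1 + d * K.+1.-1)%N by rewrite addnS addSn.
rewrite inter_bits // subn1 /=.
rewrite exprD invfM; have h3 : (3 : R) ^+ p.+1 != 0 by rewrite expf_neq0 // ; lra.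
have h3' : (3 : R) ^+ (d * K) != 0 by rewrite expf_neq0 // ; lra.
field; by rewrite h3 h3'.
Qed.
End Main.

Lemma ineq_aux (R : realType) (b L M e : R) (d m k : nat) : 0 < b -> 0 < L -> 0 < M -> (0<d)%N ->
  (m <= d*k.+1)%N -> e = b * L / (d%:R * M) -> -(b * (L *+ k)) <= b * L - e * (M *+ m).
Proof.
move=> b0 L0 M0 d0 hm ->.
have dR : 0 < (d%:R : R) by rewrite ltr0n.
rewrite -(mulr_natr L k) -(mulr_natr M m).
have E : b * L / (d%:R * M) * (M * m%:R) = b * L * (m%:R / d%:R).
  by field; rewrite !gt_eqF.
rewrite E.
have H : m%:R / d%:R <= k%:R + (1:R).
  by rewrite ler_pdivrMr // mulrC natr1 -natrM ler_nat.
have X0 : 0 <= b * L by rewrite mulr_ge0 // ltW.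
have := ler_wpM2l X0 H.
set u := m%:R / d%:R. set X := b * L.
have -> : b * (L * k%:R) = X * k%:R by rewrite /X mulrA.
rewrite mulrDr mulr1 => h.
lra.
Qed.

Lemma ineq_aux2 (R : realType) (b L : R) (K : nat) : 0 < b -> 0 < L ->
  - (b * (L *+ K)) <= - (b * (K%:R - 4)) * L.
Proof.
move=> b0 L0; rewrite -(mulr_natr L K).
have X0 : 0 <= b * L by rewrite mulr_ge0 // ltW.
have -> : - (b * (K%:R - 4)) * L = - ((b * L) * K%:R) + 4 * (b * L) by ring.
have -> : b * (L * K%:R) = (b * L) * K%:R by ring.
move: X0; set X := b * L => X0. lra.
Qed.

Section Num.
Variable R : realType.

Lemma powR_inv (x a : R) n : 0 < a -> (1 / a ^+ n) `^ x = expR (- (x * (ln a *+ n))).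
Proof.
move=> a0; have an : 0 < a ^+ n by rewrite exprn_gt0.
rewrite /powR gt_eqF ?divr_gt0 // div1r lnV ?posrE // lnXn // mulrN; reflexivity.
Qed.

Lemma powR_pos (a x : R) : 0 < a -> a `^ x = expR (x * ln a).
Proof. by move=> a0; rewrite /powR gt_eqF. Qed.

Lemma holder_num (beta Q t : R) (d m k : nat) : 0 < beta -> 0 <= Q -> (0 < d)%N ->
  (m <= d * k.+1)%N -> 1 / 3 ^+ m <= t ->
  Q * (1 / 2 ^+ k) `^ beta <= 2 `^ beta * Q * t `^ (beta * ln 2 / (d%:R * ln 3)).
Proof.
move=> b0 Q0 d0 hm ht.
have l2 : 0 < ln (2:R) by apply: ln_gt0; lra.
have l3 : 0 < ln (3:R) by apply: ln_gt0; lra.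
have dR : 0 < (d%:R : R) by rewrite ltr0n.
set e := beta * ln 2 / (d%:R * ln 3).
have e0 : 0 <= e by rewrite /e divr_ge0 // ?mulr_ge0 // ltW.
have t3 : 0 < 1 / (3:R) ^+ m by rewrite divr_gt0 // exprn_gt0.
apply: (@le_trans _ _ (2 `^ beta * Q * (1 / 3 ^+ m) `^ e)); last first.
  apply: ler_wpM2l; first by rewrite mulr_ge0 // powR_ge0.
  by apply: ge0_ler_powR => //; rewrite nnegrE ltW // (lt_le_trans t3 ht).
rewrite !powR_inv // ?powR_pos //; try lra.
rewrite (mulrC (expR _) Q) -mulrA -expRD.
have h1 : (- (beta * (ln 2 *+ k))) <= (beta * ln 2 - e * (ln 3 *+ m)) :> R.
  exact: (ineq_aux b0 l2 l3 d0 hm).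
have h2 : expR (- (beta * (ln 2 *+ k))) <= expR (beta * ln 2 - e * (ln 3 *+ m)) :> R.
  by rewrite ler_expR.
have h3 := ler_wpM2l Q0 h2.
exact h3.
Qed.

Lemma approx_num (beta Q : R) (K : nat) : 0 < beta -> 0 <= Q ->
  Q * (1 / 2 ^+ K) `^ beta <= Q * 2 `^ (- (beta * (K%:R - 4))).
Proof.
move=> b0 Q0; have l2 : 0 < ln (2:R) by apply: ln_gt0; lra.
rewrite powR_inv ?powR_pos; try lra.
have h1 := ineq_aux2 K b0 l2.
have h2 : expR (- (beta * (ln 2 *+ K))) <= expR (- (beta * (K%:R - 4)) * ln 2) :> R.
  by rewrite ler_expR.
have h3 := ler_wpM2l Q0 h2.
exact h3.
Qed.
End Num.

Section Fin.
Variable R : realType.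
Variable d : nat.
Hypothesis d0 : (0 < d)%N.

Lemma ps_trunc_const (b : 'I_d -> nat -> bool) K n :
  (forall p j, (K < j)%N -> b p j = false) -> ((d * K).+1 <= n)%N ->
  ps (3:R) (inter d0 b) n = ps (3:R) (inter d0 b) (d * K).+1.
Proof.
move=> hb hn.
have h : (1 <= (d * K).+1 <= n)%N by rewrite hn.
rewrite (ps_split 3 (inter d0 b) h) big_nat_cond big1 ?addr0 // => i /andP[/andP[hi _] _].
rewrite /inter hb ?mulr0 ?mul0r //.
rewrite ltnS -[X in (X <= _)%N](mulKn K d0); apply: leq_div2r; lia.
Qed.

Lemma inner_cvg (K : nat) (a : R -> nat -> bool) (x : 'I_d -> R) :
  ps (3:R) (inter d0 (fun p j => (j <= K)%N && a (x p) j)) @ \oo --> innerK d K a x.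
Proof.
apply: cvg_near_cst; exists (d * K).+1 => // n /= hn.
rewrite (ps_trunc_const _ hn); last by move=> p j hj; rewrite leqNgt hj.
rewrite block; apply: eq_bigr => p _; congr (_ * _); rewrite /phiK.
apply: eq_big_nat => j /andP[_ hj]; by rewrite ltnS in hj; rewrite hj.
Qed.
End Fin.

Theorem lemma4 (R : realType) (d K : nat) (hd : (2 <= d)%N) (hK : (0 < K)%N)
  (a : R -> nat -> bool) (ha : binary_expansion a)
  (f : ('I_d -> R) -> R) (beta Q : R)
  (hbeta : 0 < beta <= 1) (hQ : 0 <= Q)
  (hf : forall x y, x \in cube R d -> y \in cube R d ->
          `|f x - f y| <= Q * (linf_dist x y) `^ beta) :
  exists g : R -> R,
    [/\ forall x y, x \in cantor_set R -> y \in cantor_set R ->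
          `|g x - g y| <= 2 `^ beta * Q *
                         `|x - y| `^ (beta * ln 2 / (d%:R * ln 3)),
        forall x, x \in cube R d -> innerK d K a x \in cantor_set R,
        forall x, x \in cube R d ->
          `|f x - g (innerK d K a x)| <= Q * 2 `^ (- (beta * (K%:R - 4))) &
        ereal_sup [set (`|f x|)%:E | x in cube R d] =
        ereal_sup [set (`|g z|)%:E | z in cantor_set R]].
Proof.
have d0 : (0 < d)%N by lia.
have b0 : 0 < beta by case/andP: hbeta.
have ha2 : forall x : R, 0 <= x <= 1 -> ps (2:R) (a x) @ \oo --> x.
  by move=> x hx; have := ha x hx; rewrite binE.
have hcube : forall c, dec R c \in cube R d.
  by move=> c; rewrite in_setE => i; exact: dec01.
have hlinf : forall (x y : 'I_d -> R) (r : R), 0 <= r -> (forall i, `|x i - y i| <= r) ->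
    linf_dist x y <= r.
  by move=> x y r r0 h; apply: bigmax_le.
have hpow : forall (l r : R), 0 <= l -> l <= r -> Q * l `^ beta <= Q * r `^ beta.
  move=> l r l0 lr; apply: ler_wpM2l => //.
  by apply: ge0_ler_powR; rewrite ?nnegrE ?(ltW b0) ?(le_trans l0 lr).
have linf0 : forall x y : 'I_d -> R, 0 <= linf_dist x y.
  by move=> x y; rewrite /linf_dist; elim/big_ind: _ => // u v hu hv; rewrite le_max hu.
pose g (z : R) := f (dec R (digits z)).
exists g; split.
- move=> x y; rewrite !in_setE => /cantorE hx /cantorE hy.
  case: (pselect (exists2 m, (1 <= m)%N & digits x m != digits y m)) => [ex|nex]; last first.
    have he : forall i, (1 <= i)%N -> digits x i = digits y i.
      move=> i i1; apply: contrapT => h; apply: nex; exists i => //; exact/eqP.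
    rewrite /g (dec_eq R d he) subrr normr0.
    by rewrite mulr_ge0 ?powR_ge0 // mulr_ge0 // powR_ge0.
  have [m [m1 hag hsep]] := uniq3 (digitsP hx) (digitsP hy) ex.
  set k := ((m - 1) %/ d)%N.
  have hk : forall p : 'I_d, `|dec R (digits x) p - dec R (digits y) p| <= 1 / 2 ^+ k.
    move=> p.
    have := @lim_agree R 2 (B2 R) _ _ _ _ k (@decP R d (digits x) p) (@decP R d (digits y) p).
    have e2 : 2 / (2:R) ^+ k.+1 = 1 / 2 ^+ k by rewrite exprS; field; rewrite expf_neq0.
    rewrite e2; apply => j /andP[j1 jk]; rewrite /bits; apply: hag.
    have H1 := leq_trunc_div (m - 1) d.
    have H2 : (d * j <= d * k)%N by rewrite leq_mul2l -ltnS jk orbT.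
    have H3 : (d * j = d * j.-1 + d)%N by rewrite -mulnSr prednK.
    have H4 := ltn_ord p.
    rewrite -/k mulnC in H1; clearbody k.
    have H5 : (p.+1 + d * j.-1 <= d * j)%N by rewrite H3 addnC leq_add2l.
    have H6 := leq_trans H5 (leq_trans H2 H1).
    apply/andP; split; first by [].
    move: H6 m1; generalize (p.+1 + d * j.-1)%N => n; lia.
  apply: le_trans (hf _ _ (hcube _) (hcube _)) _.
  apply: le_trans (hpow _ _ _ (hlinf _ _ _ _ hk)) _.
  + exact: linf0.
  + by rewrite divr_ge0 // exprn_ge0.
  have hm : (m <= d * k.+1)%N.
    have H1 := ltn_pmod (m - 1) d0.
    have H2 := divn_eq (m - 1) d.
    rewrite -/k in H2; rewrite mulnS mulnC; clearbody k.
    move: H1 H2; generalize ((m - 1) %% d)%N (k * d)%N => r s; lia.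
  exact: (holder_num b0 hQ d0 hm hsep).
- move=> x _; rewrite in_setE; apply/cantorE; eexists; exact: inner_cvg.
- move=> x; rewrite in_setE => hx.
  set b := fun p j => (j <= K)%N && a (x p) j.
  have hz := @inner_cvg R d d0 K a x.
  rewrite /g (dec_eq R d (digits_uniq hz)).
  apply: le_trans (hf _ _ _ (hcube _)) _; first by rewrite in_setE.
  apply: le_trans (approx_num K b0 hQ).
  apply: hpow; first exact: linf0.
  apply: hlinf; first by rewrite divr_ge0 // exprn_ge0.
  move=> p.
  have := @lim_agree R 2 (B2 R) _ _ _ _ K (ha2 _ (hx p)) (@dec_inter R d d0 b p).
  have e2 : 2 / (2:R) ^+ K.+1 = 1 / 2 ^+ K by rewrite exprS; field; rewrite expf_neq0.
  rewrite e2; apply => j /andP[j1 jk]; rewrite /b; by rewrite ltnS in jk; rewrite jk.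
- congr ereal_sup; apply/seteqP; split => _ [x hx <-].
  + pose e := inter d0 (fun p => a (x p)).
    have hz : ps (3:R) e @ \oo --> limn (ps (3:R) e) := ps_cvg (B3 R) (c:=e).
    exists (limn (ps (3:R) e)); first by apply/cantorE; exists e.
    rewrite /g (dec_eq R d (digits_uniq hz)).
    have -> : dec R e = x; last by [].
    apply: funext => p; have h1 := @dec_inter R d d0 (fun p => a (x p)) p.
    have h2 := ha2 _ (hx p).
    move: h1 h2; exact: cvg_unique.
  + exists (dec R (digits x)) => //.
    by have := hcube (digits x); rewrite in_setE.
Qed.
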